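(* Every ABC scoring rule satisfies group participation. That is, if $f$ is the ABC scoring rule induced by a scoring function $s$, then for every approval profile $A$, every committee size $k\in\{1,\dots,m-1\}$ and every group of voters $I\subsetneq N_A$, it is not the case that $f(A_{-I},k)\succsim_i f(A,k)$ for all $i\in I$ while $f(A_{-I},k)\succ_{i^*} f(A,k)$ for some $i^*\in I$.
   Context: Let $C$ be a finite set of $m>1$ candidates. An approval profile $A$ consists of a nonempty finite set of voters $N_A$ and, for each voter $i\in N_A$, a nonempty ballot $A_i\subseteq C$. For $I\subsetneq N_A$, $A_{-I}$ denotes the profile obtained by removing the voters in $I$ (electorate $N_A\setminus I$, ballots unchanged). For $k\in\{1,\dots,m-1\}$ let $\mathcal W_k$ be the set of $k$-element subsets (committees) of $C$. An ABC voting rule $f$ maps each profile $A$ and size $k$ to a nonempty set $f(A,k)\subseteq\mathcal W_k$. Preferences: voter $i$ weakly prefers committee $W$ to $W'$ ($W\succsim_i W'$) if $|W\cap A_i|\ge|W'\cap A_i|$, strictly ($W\succ_i W'$) if $|W\cap A_i|>|W'\cap A_i|$. For sets of committees $X,Y$ (Kelly's extension): $X\succsim_i Y$ iff $W\succsim_i W'$ for all $W\in X$, $W'\in Y$; $X\succ_i Y$ iff $X\succsim_i Y$ and there exist $W\in X$, $W'\in Y$ with $W\succ_i W'$. ABC scoring rules: a scoring function $s$ assigns to all integers $0\le x\le y$ a rational number $s(x,y)$ with $s(0,y)=0$ and $s(x,y)\ge s(x',y)$ whenever $x'\le x\le y$. The score of committee $W$ in $A$ is $\hat s(A,W)=\sum_{i\in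 N_A}s(|A_i\cap W|,|A_i|)$, and the induced rule returns all $W\in\mathcal W_k$ maximizing $\hat s(A,W)$. *)

(* Defs.v *)
From mathcomp Require Import all_boot all_order all_algebra.
Set Implicit Arguments. Unset Strict Implicit. Unset Printing Implicit Defensive.
Import Order.TTheory GRing.Theory Num.Theory.
Local Open Scope ring_scope.

(* Candidates: a finType C (m = #|C|).  Voters are drawn from a finType V;
   a profile is an electorate N : {set V} together with ballots A : V -> {set C}
   (only the ballots of voters in N matter). *)

Definition scoring_function (s : nat -> nat -> rat) : Prop :=
  (forall y : nat, s 0%N y = 0) /\
  (forall x x' y : nat, (x' <= x)%N -> (x <= y)%N -> s x' y <= s x y).

Definition abc_score (C V : finType) (s : nat -> nat -> rat)
  (N : {set V}) (A : V -> {set C}) (W : {set C}) : rat :=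
  \sum_(i in N) s #|A i :&: W| #|A i|.

Definition scoring_rule (C V : finType) (s : nat -> nat -> rat)
  (N : {set V}) (A : V -> {set C}) (k : nat) : {set {set C}} :=
  [set W : {set C} | (#|W| == k) &&
     [forall W' : {set C}, (#|W'| == k) ==> (abc_score s N A W' <= abc_score s N A W)]].

Definition pref_weak (C : finType) (Ai W W' : {set C}) : bool :=
  (#|W' :&: Ai| <= #|W :&: Ai|)%N.
Definition pref_strict (C : finType) (Ai W W' : {set C}) : bool :=
  (#|W' :&: Ai| < #|W :&: Ai|)%N.

Definition kelly_weak (C : finType) (Ai : {set C}) (X Y : {set {set C}}) : Prop :=
  forall W W', W \in X -> W' \in Y -> pref_weak Ai W W'.
Definition kelly_strict (C : finType) (Ai : {set C}) (X Y : {set {set C}}) : Prop :=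
  kelly_weak Ai X Y /\ exists W W', [/\ W \in X, W' \in Y & pref_strict Ai W W'].

(* Main.v *)
Require Import Defs.
From mathcomp Require Import all_boot all_order all_algebra.
Import Order.TTheory GRing.Theory Num.Theory.
Local Open Scope ring_scope.

Lemma score_split {C V : finType} {s : nat -> nat -> rat} {N I : {set V}}
  {A : V -> {set C}} W : I \subset N ->
  abc_score s N A W = abc_score s (N :\: I) A W + abc_score s I A W.
Proof.
move=> sIN; rewrite /abc_score (big_setID I) /= addrC.
by rewrite (setIidPr sIN).
Qed.

Theorem theorem1 (C V : finType) (s : nat -> nat -> rat)
  (Hs : scoring_function s)
  (N : {set V}) (A : V -> {set C})
  (HN : N != set0) (HA : forall i, i \in N -> A i != set0)
  (k : nat) (Hk1 : (1 <= k)%N) (Hkm : (k < #|C|)%N)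
  (I : {set V}) (HI : I \proper N) :
  ~ ((forall i, i \in I ->
        kelly_weak (A i) (scoring_rule s (N :\: I) A k) (scoring_rule s N A k)) /\
     (exists2 istar, istar \in I &
        kelly_strict (A istar) (scoring_rule s (N :\: I) A k) (scoring_rule s N A k))).
Proof.
case=> Hw [j jI [_ [W [W' [WX W'Y Hst]]]]].
have sIN : I \subset N := proper_sub HI.
have HI_ge : abc_score s I A W' <= abc_score s I A W.
  rewrite /abc_score; apply: ler_sum => i iI.
  case: Hs => _ Hmon; apply: Hmon.
    by rewrite [A i :&: W]setIC [A i :&: W']setIC; exact: (Hw i iI W W' WX W'Y).
  by rewrite subset_leq_card // subsetIl.
move: WX W'Y; rewrite !inE => /andP[/eqP cW /forallP hW] /andP[/eqP cW' /forallP hW'].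
have e1 := hW' W; rewrite cW eqxx /= in e1.
have e2 := hW W'; rewrite cW' eqxx /= in e2.
rewrite !(score_split _ sIN) in e1.
have WY : W \in scoring_rule s N A k.
  rewrite inE cW eqxx /=; apply/forallP => U; apply/implyP => cU.
  have hU := implyP (hW' U) cU.
  apply: le_trans hU _.
  rewrite !(score_split _ sIN); exact: lerD.
have W'X : W' \in scoring_rule s (N :\: I) A k.
  rewrite inE cW' eqxx /=; apply/forallP => U; apply/implyP => cU.
  have hU := implyP (hW U) cU.
  apply: le_trans hU _.
  rewrite -(lerD2r (abc_score s I A W)).
  apply: le_trans e1 _; exact: lerD.
have := Hw j jI W' W W'X WY.
rewrite /pref_weak => h; move: Hst; by rewrite /pref_strict ltnNge h.
Qed.
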